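(* For every term $\xi\in\Lambda$: if $\xi\Vdash\top,\bot\to\bot$ and $\xi\Vdash\bot,\top\to\bot$, then $\xi\Vdash\top,\top\to\bot$. Consequently, $\lambda x(x)I\,I\Vdash\neg\forall x^{\beth 2}(x\neq0,x\neq1\to\bot)$ and $W\Vdash\forall x^{\beth 2}(\forall y^{\beth 2}(y\neq0,y\neq x\to y\not\le x),x\neq0\to\bot)$.
   Context: Fix an integer $N\ge 0$. The set $\Lambda$ of terms is the smallest set containing the constants $B,C,I,K,W,cc,A$ and $p,q_0,\dots,q_N$, closed under application $(\xi)\eta$ (written $\xi\eta$), and containing, for each sequence $(\xi_i)_{i\in\mathbb N}$ of closed terms (no occurrence of $p,q_0,\dots,q_N$), a constant $\bigwedge_i\xi_i$ (injectively, well-founded). Stacks: finite sequences $t_0\cdot\ldots\cdot t_{n-1}\cdot\pi_0$ of terms, $\pi_0$ the empty stack; $\Pi$ the set of stacks. $\ell_t=((C)(B)CB)t$, $k_{\pi_0}=A$, $k_{t\cdot\pi}=(\ell_t)k_\pi$; $\sigma=(BW)(C)(B)BB$, $\underline0=(K)I$, $\underline{n+1}=(\sigma)\underline n$. Execution $\succ$: least preorder on $\Lambda\times\Pi$ with $(\xi)\eta\star\pi\succ\xi\star\eta\cdot\pi$; $B\star\xi\cdot\eta\cdot\zeta\cdot\pi\succ\xi\star(\eta)\zeta\cdot\pi$; $C\star\xi\cdot\eta\cdot\zeta\cdot\pi\succ\xi\star\zeta\cdot\eta\cdot\pi$; $I\star\xi\cdot\pi\succ\xi\star\pi$; $K\star\xi\cdot\eta\cdot\pi\succ\xi\star\pi$;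 $W\star\xi\cdot\eta\cdot\pi\succ\xi\star\eta\cdot\eta\cdot\pi$; $cc\star\xi\cdot\pi\succ\xi\star k_\pi\cdot\pi$; $A\star\xi\cdot\pi\succ\xi\star\pi_0$; $\bigwedge_i\xi_i\star\underline n\cdot\pi\succ\xi_n\star\pi$. Pole $\perp\!\!\!\perp=\{\xi\star\pi:\exists\varpi,\ \xi\star\pi\succ p\star\varpi\}$. $\lambda$-terms are translated into terms by the usual combinatory translation. Realizability (Krivine): $\xi\Vdash F$ iff $\xi\star\pi\in\perp\!\!\!\perp$ for all $\pi\in\|F\|$, with $\|\bot\|=\Pi$, $\|\top\|=\emptyset$, $\|A\to B\|=\{\eta\cdot\pi:\eta\Vdash A,\pi\in\|B\|\}$, $A_1,A_2\to B$ means $A_1\to(A_2\to B)$, $\neg A$ means $A\to\bot$, $\|\forall x F[x]\|=\bigcup_a\|F[a]\|$. $\beth2$ is the characteristic Boolean algebra of the realizability model, with underlying set $\{0,1\}$ (ordered by $0\le1$); the relativized quantifier satisfies $\|\forall x^{\beth 2}F[x]\|=\|F[0]\|\cup\|F[1]\|$, and for $a,b\in\{0,1\}$ the atomic formulas $a\neq b$, $a\not\le b$ are interpreted as $\top$ when true and $\bot$ when false. *)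

(* Defs.v *)
From Stdlib Require Import List Relations Bool Arith.
Import ListNotations.

(* Raw syntax of terms. [Tq i] is q_i; [Conj f] is the constant /\_i f i.
   The actual set Lambda is carved out by [wf N] below (q_i only for i <= N,
   and /\_i xi_i only for sequences of closed terms). *)
Inductive term : Type :=
| TB | TC | TI | TK | TW | Tcc | TA
| Tp
| Tq (i : nat)
| App (t u : term)
| Conj (f : nat -> term).

Fixpoint closed (t : term) : Prop :=
  match t with
  | Tp => False
  | Tq _ => False
  | App t u => closed t /\ closed u
  | Conj f => forall i, closed (f i)
  | _ => True
  end.

Fixpoint wf (N : nat) (t : term) : Prop :=
  match t with
  | Tq i => i <= N
  | App t u => wf N t /\ wf N u
  | Conj f => forall i, closed (f i) /\ wf N (f i)
  | _ => True
  end.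

(* stacks: finite sequences of terms, the empty list is pi_0 *)
Definition stack := list term.
Definition stack_wf (N : nat) (s : stack) : Prop := Forall (wf N) s.

Definition ell (t : term) : term := App (App TC (App (App TB TC) TB)) t.
Fixpoint kst (s : stack) : term :=
  match s with
  | [] => TA
  | t :: s' => App (ell t) (kst s')
  end.
(* sigma = (BW)(C)(B)BB = (B W) (C ((B B) B)) *)
Definition sigma : term := App (App TB TW) (App TC (App (App TB TB) TB)).
Fixpoint num (n : nat) : term :=
  match n with
  | 0 => App TK TI
  | S n' => App sigma (num n')
  end.

Definition process := (term * stack)%type.

Inductive step : process -> process -> Prop :=
| st_app x y s : step (App x y, s) (x, y :: s)
| st_B x y z s : step (TB, x :: y :: z :: s) (x, App y z :: s)
| st_C x y z s : step (TC, x :: y :: z :: s) (x, z :: y :: s)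
| st_I x s : step (TI, x :: s) (x, s)
| st_K x y s : step (TK, x :: y :: s) (x, s)
| st_W x y s : step (TW, x :: y :: s) (x, y :: y :: s)
| st_cc x s : step (Tcc, x :: s) (x, kst s :: s)
| st_A x s : step (TA, x :: s) (x, [])
| st_Conj f n s : step (Conj f, num n :: s) (f n, s).

Definition exec : relation process := clos_refl_trans process step.

Definition pole (t : term) (s : stack) : Prop :=
  exists w, exec (t, s) (Tp, w).

Definition fv := stack -> Prop.

Definition realizes (N : nat) (t : term) (F : fv) : Prop :=
  forall s, F s -> pole t s.

Definition Bot (N : nat) : fv := stack_wf N.
Definition Top : fv := fun _ => False.

Definition arr (N : nat) (A B : fv) : fv :=
  fun s => match s with
           | [] => False
           | e :: s' => wf N e /\ realizes N e A /\ B s'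
           end.

Definition neg (N : nat) (A : fv) : fv := arr N A (Bot N).

(* beth2 has underlying set {0,1}; we use bool with 0 = false, 1 = true,
   ordered by false <= true. *)
Definition all2 (F : bool -> fv) : fv := fun s => F false s \/ F true s.
Definition neq2 (N : nat) (a b : bool) : fv := if Bool.eqb a b then Bot N else Top.
Definition le2 (a b : bool) : bool := implb a b.
Definition nle2 (N : nat) (a b : bool) : fv := if le2 a b then Bot N else Top.

(* lambda-terms and the usual combinatory translation (bracket abstraction
   for the basis B, C, I, K, W) *)
Inductive lam : Type :=
| LVar (x : nat)
| LApp (t u : lam)
| LAbs (x : nat) (t : lam)
| LCst (c : term).

Inductive cl : Type :=
| CV (x : nat)
| CT (c : term)
| CA (t u : cl).

Fixpoint occurs (x : nat) (c : cl) : bool :=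
  match c with
  | CV y => Nat.eqb x y
  | CT _ => false
  | CA t u => occurs x t || occurs x u
  end.

Fixpoint abs (x : nat) (c : cl) : cl :=
  if negb (occurs x c) then CA (CT TK) c else
  match c with
  | CV _ => CT TI
  | CT c => CA (CT TK) (CT c)
  | CA t u =>
      if negb (occurs x u) then CA (CA (CT TC) (abs x t)) u
      else if negb (occurs x t) then CA (CA (CT TB) t) (abs x u)
      else CA (CT TW) (CA (CA (CT TC) (CA (CA (CT TB) (CT TB)) (abs x t))) (abs x u))
  end.

Fixpoint lam_to_cl (t : lam) : cl :=
  match t with
  | LVar x => CV x
  | LApp t u => CA (lam_to_cl t) (lam_to_cl u)
  | LAbs x t => abs x (lam_to_cl t)
  | LCst c => CT c
  end.

Fixpoint cl_to_term (c : cl) : option term :=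
  match c with
  | CV _ => None
  | CT t => Some t
  | CA t u => match cl_to_term t, cl_to_term u with
              | Some a, Some b => Some (App a b)
              | _, _ => None
              end
  end.

Definition translate (t : lam) : option term := cl_to_term (lam_to_cl t).

Definition lam_xII : lam := LAbs 0 (LApp (LApp (LVar 0) (LCst TI)) (LCst TI)).

(* Main.v *)
Require Import Defs.
From Stdlib Require Import List Relations Bool Arith.
Import ListNotations.

Inductive mt : Type := MT (t : term) | MA | MB | MApp (u v : mt).

Fixpoint inst (a b : term) (m : mt) : term :=
  match m with
  | MT t => t | MA => a | MB => b
  | MApp u v => App (inst a b u) (inst a b v)
  end.

Fixpoint mf (m : mt) : Prop :=
  match m with MT _ => True | MA => False | MB => False | MApp u v => mf u /\ mf v end.

Fixpoint hasp (t : term) : bool :=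
  match t with Tp => true | App u v => hasp u || hasp v | _ => false end.

Lemma inst_mf a b a' b' m : mf m -> inst a b m = inst a' b' m.
Proof. induction m; simpl; intuition; congruence. Qed.

Lemma nop_mf a b m : hasp a = true -> hasp b = true -> hasp (inst a b m) = false -> mf m.
Proof.
  intros Ha Hb; induction m; simpl; intros H; try congruence; auto.
  apply orb_false_iff in H; intuition.
Qed.

Lemma num_nop n : hasp (num n) = false.
Proof. induction n; simpl; auto. Qed.

Lemma num_inj n m : num n = num m -> n = m.
Proof.
  revert m; induction n; destruct m; simpl; intros H; try discriminate; auto.
  injection H; intros; f_equal; auto.
Qed.

Lemma step_det X Y Z : step X Y -> step X Z -> Y = Z.
Proof.
  intros H1 H2; destruct H1; inversion H2; subst; auto.
  match goal with H : num _ = num _ |- _ => apply num_inj in H; subst; auto end.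
Qed.

Definition mell (m : mt) : mt := MApp (MApp (MT TC) (MT (App (App TB TC) TB))) m.
Fixpoint mkst (s : list mt) : mt :=
  match s with [] => MT TA | m :: s' => MApp (mell m) (mkst s') end.

Lemma inst_mkst a b s : inst a b (mkst s) = kst (map (inst a b) s).
Proof. induction s; simpl; auto. rewrite IHs; auto. Qed.

Lemma lift a b m ms Y : hasp a = true -> hasp b = true -> m <> MA -> m <> MB ->
  step (inst a b m, map (inst a b) ms) Y ->
  exists m' ms', Y = (inst a b m', map (inst a b) ms') /\
    forall a' b', step (inst a' b' m, map (inst a' b') ms) (inst a' b' m', map (inst a' b') ms').
Proof.
  intros Ha Hb H1 H2 Hs.
  destruct m as [t| | |u v]; try congruence.
  2:{ simpl in Hs; inversion Hs; subst. exists u, (v :: ms); split; auto.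
      intros; simpl; constructor. }
  simpl in Hs; destruct t.
  - destruct ms as [|m1 [|m2 [|m3 ms0]]]; inversion Hs; subst.
    exists m1, (MApp m2 m3 :: ms0); split; auto. intros; simpl; constructor.
  - destruct ms as [|m1 [|m2 [|m3 ms0]]]; inversion Hs; subst.
    exists m1, (m3 :: m2 :: ms0); split; auto. intros; simpl; constructor.
  - destruct ms as [|m1 ms0]; inversion Hs; subst.
    exists m1, ms0; split; auto. intros; simpl; constructor.
  - destruct ms as [|m1 [|m2 ms0]]; inversion Hs; subst.
    exists m1, ms0; split; auto. intros; simpl; constructor.
  - destruct ms as [|m1 [|m2 ms0]]; inversion Hs; subst.
    exists m1, (m2 :: m2 :: ms0); split; auto. intros; simpl; constructor.
  - destruct ms as [|m1 ms0]; inversion Hs; subst.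
    exists m1, (mkst ms0 :: ms0); split. simpl; rewrite inst_mkst; auto.
    intros; simpl; rewrite inst_mkst; constructor.
  - destruct ms as [|m1 ms0]; inversion Hs; subst.
    exists m1, []; split; auto. intros; simpl; constructor.
  - inversion Hs.
  - inversion Hs.
  - inversion Hs; subst. exists (MT t1), (MT t2 :: ms); split; auto.
    intros; simpl; constructor.
  - destruct ms as [|m0 ms0]; inversion Hs; subst.
    assert (Hm : mf m0).
    { apply (nop_mf a b); auto. rewrite <- H3. apply num_nop. }
    exists (MT (f n)), ms0; split; auto. intros a' b'; simpl.
    rewrite (inst_mf a' b' a b m0 Hm), <- H3. constructor.
Qed.

Definition Lp := App (App (App TW TW) TW) Tp.
Definition Ip := App TI Tp.

Definition loopset (X : process) : Prop :=
  exists r, X = (Lp, r) \/ X = (App (App TW TW) TW, Tp :: r) \/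
            X = (App TW TW, TW :: Tp :: r) \/ X = (TW, TW :: TW :: Tp :: r).

Lemma loop_closed X Z : exec X Z -> loopset X -> loopset Z.
Proof.
  induction 1; auto.
  intros [r Hr]; destruct Hr as [E|[E|[E|E]]]; subst; inversion H; subst.
  - exists r; auto.
  - exists r; auto.
  - exists r; auto.
  - exists r; auto.
Qed.

Lemma loop_nopole r : ~ pole Lp r.
Proof.
  intros [w Hw]. apply loop_closed in Hw.
  - destruct Hw as [r' [E|[E|[E|E]]]]; discriminate.
  - exists r; auto.
Qed.

Lemma pole_1n t s : pole t s <-> exists w, clos_refl_trans_1n _ step (t, s) (Tp, w).
Proof.
  unfold pole, exec; split; intros [w H]; exists w; apply clos_rt_rt1n_iff; auto.
Qed.

Lemma pole_back t s t' s' : step (t, s) (t', s') -> pole t' s' -> pole t s.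
Proof.
  intros H [w Hw]; exists w. eapply rt_trans; [apply rt_step; eauto | eauto].
Qed.

Section Main.
Variables e1 e2 : term.

Lemma main X Z : clos_refl_trans_1n _ step X Z -> forall m ms w,
  X = (inst Lp Ip m, map (inst Lp Ip) ms) -> Z = (Tp, w) ->
  pole (inst Ip Lp m) (map (inst Ip Lp) ms) ->
  pole (inst e1 e2 m) (map (inst e1 e2) ms).
Proof.
  induction 1; intros m ms w EX EZ P2.
  - rewrite EX in EZ. destruct m as [t| | |u v]; simpl in EZ; try discriminate.
    injection EZ; intros; subst. simpl. exists (map (inst e1 e2) ms); apply rt_refl.
  - subst x z. destruct m as [t| | |u v] eqn:Em.
    +
      destruct (lift Lp Ip (MT t) ms y eq_refl eq_refl ltac:(discriminate) ltac:(discriminate) H)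
        as [m' [ms' [Ey Hst]]]. subst y.
      apply (pole_back _ _ _ _ (Hst e1 e2)).
      apply (IHclos_refl_trans_1n m' ms' w eq_refl eq_refl).
      apply pole_1n in P2. destruct P2 as [w' P2]. inversion P2 as [Q1|Q1 y2 Q4 Q5]; subst.
      * simpl in *. inversion H.
      * pose proof (step_det _ _ _ Q4 (Hst Ip Lp)); subst. apply pole_1n; eauto.
    + exfalso; simpl in H. apply (loop_nopole (map (inst Lp Ip) ms)).
      exists w. apply clos_rt_rt1n_iff. econstructor; eauto.
    + exfalso; simpl in P2. apply (loop_nopole _ P2).
    + destruct (lift Lp Ip (MApp u v) ms y eq_refl eq_refl ltac:(discriminate) ltac:(discriminate) H)
        as [m' [ms' [Ey Hst]]]. subst y.
      apply (pole_back _ _ _ _ (Hst e1 e2)).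
      apply (IHclos_refl_trans_1n m' ms' w eq_refl eq_refl).
      apply pole_1n in P2. destruct P2 as [w' P2]. inversion P2 as [Q1|Q1 y2 Q4 Q5]; subst.
      pose proof (step_det _ _ _ Q4 (Hst Ip Lp)); subst. apply pole_1n; eauto.
Qed.
End Main.

Lemma map_MT a b s : map (inst a b) (map MT s) = s.
Proof. induction s; simpl; f_equal; auto. Qed.

Lemma Ip_bot N : wf N Ip /\ realizes N Ip (Bot N).
Proof.
  split. simpl; auto.
  intros s _. exists s. eapply rt_trans; apply rt_step; constructor.
Qed.

Lemma part1 N : forall xi : term, wf N xi ->
     realizes N xi (arr N Top (arr N (Bot N) (Bot N))) ->
     realizes N xi (arr N (Bot N) (arr N Top (Bot N))) ->
     realizes N xi (arr N Top (arr N Top (Bot N))).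
Proof.
  intros xi Hw H1 H2 s Hs.
  destruct s as [|e [|e' s]]; simpl in Hs; try tauto.
  destruct Hs as [He [_ [He' [_ Hs]]]].
  destruct (Ip_bot N) as [Iw Ib].
  assert (P1 : pole xi (Lp :: Ip :: s)).
  { apply H1. simpl. repeat split; auto. intros _ []. }
  assert (P2 : pole xi (Ip :: Lp :: s)).
  { apply H2. simpl. repeat split; auto. intros _ []. }
  pose proof (main e e' (xi, Lp :: Ip :: s)) as M.
  apply pole_1n in P1. destruct P1 as [w P1].
  specialize (M _ P1 (MT xi) (MA :: MB :: map MT s) w).
  simpl in M. rewrite !map_MT in M. apply M; auto.
Qed.

Theorem corollary1 (N : nat) :
  (forall xi : term, wf N xi ->
     realizes N xi (arr N Top (arr N (Bot N) (Bot N))) ->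
     realizes N xi (arr N (Bot N) (arr N Top (Bot N))) ->
     realizes N xi (arr N Top (arr N Top (Bot N))))
  /\
  (exists t : term, translate lam_xII = Some t /\
     realizes N t
       (neg N (all2 (fun x => arr N (neq2 N x false) (arr N (neq2 N x true) (Bot N))))))
  /\
  realizes N TW
    (all2 (fun x =>
       arr N (all2 (fun y => arr N (neq2 N y false) (arr N (neq2 N y x) (nle2 N y x))))
             (arr N (neq2 N x false) (Bot N)))).
Proof.
  split; [apply part1|split].
  - eexists; split; [vm_compute; reflexivity|].
    intros s Hs. destruct s as [|e s]; simpl in Hs; try tauto.
    destruct Hs as [He [Hr Hs]].
    assert (P : pole e (TI :: TI :: s)).
    { apply (part1 N e He).
      - intros s' Hs'; apply Hr; unfold all2; simpl; auto.
      - intros s' Hs'; apply Hr; unfold all2; simpl; auto.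
      - simpl; repeat split; auto; intros _ []. }
    destruct P as [w P]; exists w.
    eapply rt_trans; [|exact P].
    repeat (eapply rt_trans; [apply rt_step; constructor|]). apply rt_refl.
  - intros s Hs. destruct s as [|e [|e' s]];
      unfold all2 in Hs; simpl in Hs; try tauto.
    destruct Hs as [[He [Hr [He' [Hr' Hs]]]]|[He [Hr [He' [Hr' Hs]]]]].
    +
      eapply pole_back; [constructor|].
      apply Hr; left; simpl; repeat split; auto.
    + eapply pole_back; [constructor|].
      apply (part1 N e He).
      * intros s' Hs'; apply Hr; unfold all2; simpl; auto.
      * intros s' Hs'; apply Hr; unfold all2; simpl; auto.
      * simpl; repeat split; auto; intros _ [].
Qed.
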